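(* Let $X$ be a precubical set and $\alpha$ a dipath on $\vec{|X|}$. Then there is a dipath $\beta$ on $\vec{|X|}$ from $\mathrm{supp}(\alpha(0))_*(0,\ldots,0)$ to $\mathrm{supp}(\alpha(1))_*(0,\ldots,0)$ such that $U(\beta):[0,1]\to|X|$ is cellular and $U(\alpha)$ is homotopic to $U(\beta)$. Moreover, if $\alpha$ is non-constant and $\alpha(0)=\alpha(1)$, then $\beta$ can be taken to be non-constant.
   Context: Streams: a circulation on a space $X$ assigns to each open $V\subset X$ a preorder $\leqslant_V$ such that for every collection $\mathcal{O}$ of open sets, $\leqslant_{\bigcup\mathcal{O}}$ is the preorder with smallest graph containing $\bigcup_{V\in\mathcal{O}}\mathrm{graph}(\leqslant_V)$; a stream is a space with a circulation; a stream map $f:X\to Y$ is continuous with $f(x)\leqslant_V f(y)$ whenever $x\leqslant_{f^{-1}V}y$; $U$ is the forgetful functor to spaces. $\vec\square[1]$ is $[0,1]$ with circulation $x\leqslant_V y$ iff $x\le y$ and $[x,y]\subset V$; a dipath on a stream is a stream map from $\vec\square[1]$. Precubical sets: $\square$ is the smallest subcategory of posets and monotone maps closed under cartesian products (unit $[0]$) containing $\delta_\pm:[0]\to[1]=\{0<1\}$; objects $[1]^n$. A precubical set is a functor $X:\square^{op}\to\mathbf{Set}$, $X_n=X([1]^n)$; $\square[n]=\square(-,[1]^n)$, and $\sigma\in X_n$ corresponds by Yoneda to $\sigma_*:\square[n]\to X$. The geometric realization $|X|=\int^{[1]^n}X_n\cdot\mathbb{I}^n$ (with $\square$-morphisms extended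 linearly) is a CW complex whose $n$-cells have characteristic maps $|\sigma_*|:\mathbb{I}^n=|\square[n]|\to|X|$, $\sigma\in X_n$. Each $x\in|X|$ lies in the interior of a unique closed cell; $\mathrm{supp}(x)\in X_d$ is the corresponding cube, and $\mathrm{supp}(x)_*(0,\ldots,0)$ denotes the vertex $|\mathrm{supp}(x)_*|(0,\ldots,0)\in|X|$. $\vec\square[n]$ is the $n$-fold product of $\vec\square[1]$ in streams; the stream realization is the coend $\vec{|X|}=\int^{[1]^n}X_n\cdot\vec\square[n]$ in streams, with underlying space $|X|$. $[0,1]$ carries the CW structure with vertices $0,1$. *)

(* Defs.v *)
From Stdlib Require Import Reals List Relations.
Open Scope R_scope.
Set Implicit Arguments.

Record Stream := {
  scar  : Type;
  sopen : (scar -> Prop) -> Prop;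
  scirc : (scar -> Prop) -> scar -> scar -> Prop   (* V |-> <=_V *)
}.

Definition union {T : Type} (O : (T -> Prop) -> Prop) : T -> Prop :=
  fun x => exists V, O V /\ V x.

Definition IsTopology (T : Type) (opn : (T -> Prop) -> Prop) : Prop :=
  opn (fun _ => True) /\
  (forall O : (T -> Prop) -> Prop, (forall V, O V -> opn V) -> opn (union O)) /\
  (forall U V, opn U -> opn V -> opn (fun x => U x /\ V x)).

(* A circulation: each open V gets a preorder <=_V on V, and for every
   collection O of open sets, <=_(union O) is the smallest preorder containing
   the union of the graphs of the <=_V, V in O (= transitive closure of that
   union, since each <=_V is already reflexive on V). *)
Definition IsCirculation (T : Type) (opn : (T -> Prop) -> Prop)
    (c : (T -> Prop) -> T -> T -> Prop) : Prop :=
  (forall V, opn V ->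
     (forall x y, c V x y -> V x /\ V y) /\
     (forall x, V x -> c V x x) /\
     (forall x y z, c V x y -> c V y z -> c V x z)) /\
  (forall O : (T -> Prop) -> Prop, (forall V, O V -> opn V) ->
     forall x y, c (union O) x y <->
       clos_trans T (fun a b => exists V, O V /\ c V a b) x y).

Definition IsStream (S : Stream) : Prop :=
  IsTopology (@sopen S) /\ IsCirculation (@sopen S) (@scirc S).

Definition continuous (A B : Stream) (f : scar A -> scar B) : Prop :=
  forall V, sopen B V -> sopen A (fun x => V (f x)).

Definition stream_map (A B : Stream) (f : scar A -> scar B) : Prop :=
  continuous A B f /\
  forall V, sopen B V -> forall x y,
    scirc A (fun z => V (f z)) x y -> scirc B V (f x) (f y).

Definition I : Type := { r : R | 0 <= r <= 1 }.

Definition I_open (W : I -> Prop) : Prop :=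
  forall x, W x -> exists eps, eps > 0 /\
    forall y : I, Rabs (proj1_sig y - proj1_sig x) < eps -> W y.

Definition I_circ (V : I -> Prop) (x y : I) : Prop :=
  proj1_sig x <= proj1_sig y /\
  forall z : I, proj1_sig x <= proj1_sig z <= proj1_sig y -> V z.

Definition streamI : Stream := {| scar := I; sopen := I_open; scirc := I_circ |}.

Lemma I0_pf : 0 <= 0 <= 1. Proof. split; [apply Rle_refl | apply Rle_0_1]. Qed.
Lemma I1_pf : 0 <= 1 <= 1. Proof. split; [apply Rle_0_1 | apply Rle_refl]. Qed.
Definition I0 : I := exist _ 0 I0_pf.
Definition I1 : I := exist _ 1 I1_pf.

Lemma clamp_pf (r : R) : 0 <= Rmax 0 (Rmin 1 r) <= 1.
Proof.
  split; [apply Rmax_l|]. apply Rmax_lub; [apply Rle_0_1 | apply Rmin_l].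
Qed.
(* clamping into [0,1]; only ever applied to numbers already in [0,1] *)
Definition mkI (r : R) : I := exist _ (Rmax 0 (Rmin 1 r)) (clamp_pf r).

Record cube_pt (n : nat) := {
  cp : list R;
  cp_len : length cp = n;
  cp_rng : Forall (fun r => 0 <= r <= 1) cp
}.

Definition cube_open (n : nat) (W : cube_pt n -> Prop) : Prop :=
  forall t, W t -> exists eps, eps > 0 /\
    forall s : cube_pt n,
      Forall2 (fun a b => Rabs (a - b) < eps) (cp s) (cp t) -> W s.

Definition cubeS (n : nat) (P : (cube_pt n -> Prop) -> cube_pt n -> cube_pt n -> Prop)
  : Stream := {| scar := cube_pt n; sopen := @cube_open n; scirc := P |}.

Definition proj (n i : nat) (t : cube_pt n) : I := mkI (nth i (cp t) 0).

(* P is the circulation of the n-fold product of \vec\square[1] in streams: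
   characterised by the universal property of the product. *)
Definition IsProductCirc (n : nat)
    (P : (cube_pt n -> Prop) -> cube_pt n -> cube_pt n -> Prop) : Prop :=
  IsCirculation (@cube_open n) P /\
  (forall i, (i < n)%nat -> stream_map (cubeS P) streamI (proj i)) /\
  (forall Z : Stream, IsStream Z ->
     forall g : scar Z -> cube_pt n,
       (forall i, (i < n)%nat -> stream_map Z streamI (fun z => proj i (g z))) ->
       stream_map Z (cubeS P) g).

(* A morphism [1]^m -> [1]^n of the cube category is a list f of length n:
   entry [Some b] = output coordinate constantly b, entry [None] = next input
   coordinate (in order); m = number of [None]s. *)
Definition nones (f : list (option bool)) : nat :=
  length (filter (fun o => match o with None => true | Some _ => false end) f).

(* composite g o f of f : [1]^m -> [1]^n and g : [1]^n -> [1]^p *)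
Fixpoint comp (g f : list (option bool)) : list (option bool) :=
  match g with
  | nil => nil
  | Some b :: g' => Some b :: comp g' f
  | None :: g' => match f with
                  | y :: f' => y :: comp g' f'
                  | nil => None :: comp g' nil
                  end
  end.

(* linear extension f_* : I^m -> I^n *)
Fixpoint app (f : list (option bool)) (t : list R) : list R :=
  match f with
  | nil => nil
  | Some b :: f' => (if b then 1 else 0) :: app f' t
  | None :: f' => match t with
                  | x :: t' => x :: app f' t'
                  | nil => 0 :: app f' nil
                  end
  end.

(* A precubical set, a functor square^op -> Set, presented by the total set of
   cubes, X_n = {x | dim x = n}, and the (contravariant) action of morphisms. *)
Unset Implicit Arguments.
Record PCSet := {
  cube : Type;
  dim : cube -> nat;
  act : list (option bool) -> cube -> cube;
  act_dim : forall f x, dim x = length f -> dim (act f x) = nones f;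
  act_id : forall x, act (repeat None (dim x)) x = x;
  act_comp : forall g f x, dim x = length g -> length f = nones g ->
     act (comp g f) x = act f (act g x)
}.
Arguments dim {p} _.
Arguments act {p} _ _.
Set Implicit Arguments.

Section Real.
Variable X : PCSet.

Record prept := {
  pc : cube X;
  pt : list R;
  pdim : length pt = dim pc;
  prng : Forall (fun r => 0 <= r <= 1) pt
}.

(* generating relation of the coend: (f^* x, t) ~ (x, f_* t) *)
Definition step (p q : prept) : Prop :=
  exists f, dim (pc q) = length f /\ pc p = act f (pc q) /\ pt q = app f (pt p).

Definition pequiv : prept -> prept -> Prop := clos_refl_sym_trans prept step.

Definition realpt : Type :=
  { P : prept -> Prop | exists p, forall q, P q <-> pequiv p q }.

Definition mkpre (s : cube X) (t : cube_pt (dim s)) : prept :=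
  {| pc := s; pt := cp t; pdim := cp_len t; prng := cp_rng t |}.

Lemma class_pf (p : prept) :
  exists p', forall q, pequiv p q <-> pequiv p' q.
Proof. exists p. intro q. split; auto. Qed.

Definition real (s : cube X) (t : cube_pt (dim s)) : realpt :=
  exist _ (fun q => pequiv (@mkpre s t) q) (class_pf (@mkpre s t)).
Arguments real : clear implicits.

Definition real_open (U : realpt -> Prop) : Prop :=
  forall s : cube X, cube_open (fun t : cube_pt (dim s) => U (real s t)).

Definition realS (C : (realpt -> Prop) -> realpt -> realpt -> Prop) : Stream :=
  {| scar := realpt; sopen := real_open; scirc := C |}.

(* C is the circulation of the stream realization (coend in streams) with
   respect to the product circulations P n on I^n: universal property. *)
Definition IsRealCirc
    (P : forall n, (cube_pt n -> Prop) -> cube_pt n -> cube_pt n -> Prop)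
    (C : (realpt -> Prop) -> realpt -> realpt -> Prop) : Prop :=
  IsCirculation real_open C /\
  (forall s : cube X, stream_map (cubeS (P (dim s))) (realS C) (real s)) /\
  (forall Y : Stream, IsStream Y ->
     forall g : realpt -> scar Y,
       (forall s : cube X,
          stream_map (cubeS (P (dim s))) Y (fun t => g (real s t))) ->
       stream_map (realS C) Y g).

Definition dipath (C : (realpt -> Prop) -> realpt -> realpt -> Prop)
    (a : I -> realpt) : Prop :=
  stream_map streamI (realS C) a.

Definition IsSupp (x : realpt) (s : cube X) : Prop :=
  exists t : cube_pt (dim s), Forall (fun r => 0 < r < 1) (cp t) /\ real s t = x.

Lemma zero_rng (n : nat) : Forall (fun r => 0 <= r <= 1) (repeat 0 n).
Proof. induction n; simpl; constructor; auto. exact I0_pf. Qed.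

Definition zero_pt (n : nat) : cube_pt n :=
  {| cp := repeat 0 n; cp_len := repeat_length 0 n; cp_rng := zero_rng n |}.

Definition vertex (s : cube X) : realpt := real s (zero_pt (dim s)).

Definition skel (k : nat) (x : realpt) : Prop :=
  exists (s : cube X) (t : cube_pt (dim s)), (dim s <= k)%nat /\ real s t = x.

(* cellular w.r.t. the CW structure on [0,1] with vertices 0, 1 *)
Definition cellular (b : I -> realpt) : Prop :=
  skel 0 (b I0) /\ skel 0 (b I1) /\ forall u, skel 1 (b u).

Definition homotopic (a b : I -> realpt) : Prop :=
  exists H : I -> I -> realpt,
    (forall U, real_open U -> forall s t, U (H s t) ->
       exists eps, eps > 0 /\ forall s' t' : I,
         Rabs (proj1_sig s' - proj1_sig s) < eps ->
         Rabs (proj1_sig t' - proj1_sig t) < eps -> U (H s' t')) /\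
    (forall s, H s I0 = a s) /\ (forall s, H s I1 = b s).

Definition nonconst (a : I -> realpt) : Prop := exists u v, a u <> a v.

End Real.
Arguments vertex {X} s.
Arguments IsSupp {X} x s.
Arguments cellular {X} b.
Arguments homotopic {X} a b.
Arguments nonconst {X} a.
Arguments dipath {X} C a.
Arguments IsRealCirc {X} P C.

(* Main.v *)
From Pilot Require Import Defs.
From Stdlib Require Import Reals List Relations Lra Lia Classical ClassicalEpsilon FunctionalExtensionality PropExtensionality ProofIrrelevance.
Import Pilot.Defs.
Open Scope R_scope.

Definition rng (r : R) : Prop := 0 <= r <= 1.
Definition maskf (r : R) : option bool :=
  if Req_dec_T r 0 then Some false else if Req_dec_T r 1 then Some true else None.
Definition innb (r : R) : bool :=
  if Req_dec_T r 0 then false else if Req_dec_T r 1 then false else true.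
Definition mask (t : list R) := map maskf t.
Definition inner (t : list R) := filter innb t.
Definition lowf (r : R) : R := if Req_dec_T r 1 then 1 else 0.

Lemma mask_length t : length (mask t) = length t.
Proof. apply length_map. Qed.

Lemma nones_mask t : nones (mask t) = length (inner t).
Proof.
  induction t as [|a t IH]; simpl; auto.
  unfold maskf, innb, nones in *; simpl.
  destruct (Req_dec_T a 0); simpl; auto.
  destruct (Req_dec_T a 1); simpl; auto.
Qed.

Lemma nones_cons_some b f : nones (Some b :: f) = nones f.
Proof. reflexivity. Qed.
Lemma nones_cons_none f : nones (None :: f) = S (nones f).
Proof. reflexivity. Qed.

Lemma comp_mask f t : length t = nones f -> comp f (mask t) = mask (app f t).
Proof.
  revert t; induction f as [|o f IH]; intros t Ht; simpl; auto.
  destruct o as [b|].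
  - rewrite IH by exact Ht. unfold mask at 2; simpl. f_equal.
    unfold maskf. destruct b.
    + destruct (Req_dec_T 1 0); [lra|]. destruct (Req_dec_T 1 1); [auto|lra].
    + destruct (Req_dec_T 0 0); [auto|lra].
  - destruct t as [|a t]; [simpl in Ht; discriminate|].
    simpl. rewrite IH. reflexivity. rewrite nones_cons_none in Ht. simpl in Ht. lia.
Qed.

Lemma inner_app_f f t : length t = nones f -> inner (app f t) = inner t.
Proof.
  revert t; induction f as [|o f IH]; intros t Ht; simpl.
  - destruct t; simpl in *; auto; discriminate.
  - destruct o as [b|].
    + unfold inner at 1; simpl. unfold innb at 1. destruct b.
      * destruct (Req_dec_T 1 0); [lra|]. destruct (Req_dec_T 1 1); [|lra]. apply IH; auto.
      * destruct (Req_dec_T 0 0); [|lra]. apply IH; auto.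
    + destruct t as [|a t]; [simpl in Ht; discriminate|].
      assert (Ht' : length t = nones f) by (rewrite nones_cons_none in Ht; simpl in Ht; lia).
      specialize (IH t Ht'). unfold inner in *; simpl. destruct (innb a); [rewrite IH|]; auto.
Qed.

Lemma app_mask_inner t : app (mask t) (inner t) = t.
Proof.
  induction t as [|a t IH]; simpl; auto.
  unfold maskf, inner, innb; simpl.
  destruct (Req_dec_T a 0) as [e|n0].
  - subst. simpl. f_equal; auto.
  - destruct (Req_dec_T a 1) as [e|n1].
    + subst; simpl; f_equal; auto.
    + simpl. f_equal; auto.
Qed.

Lemma app_mask_zeros t k : app (mask t) (repeat 0 k) = map lowf t.
Proof.
  revert k; induction t as [|a t IH]; intro k; simpl; auto.
  unfold maskf, lowf.
  destruct (Req_dec_T a 0) as [e|n0].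
  - subst. destruct (Req_dec_T 0 1); [lra|]. simpl. f_equal; auto.
  - destruct (Req_dec_T a 1) as [e|n1].
    + simpl; f_equal; auto.
    + destruct k; simpl; f_equal; auto.
      specialize (IH 0%nat). simpl in IH. exact IH.
Qed.

Definition interior (t : list R) := Forall (fun r => 0 < r < 1) t.

Lemma mask_interior t : interior t -> mask t = repeat None (length t).
Proof.
  induction 1; simpl; auto. unfold maskf.
  destruct (Req_dec_T x 0); [lra|]. destruct (Req_dec_T x 1); [lra|]. f_equal; auto.
Qed.

Lemma inner_interior t : interior t -> inner t = t.
Proof.
  induction 1; simpl; auto. unfold inner in *; simpl. unfold innb.
  destruct (Req_dec_T x 0); [lra|]. destruct (Req_dec_T x 1); [lra|]. f_equal; auto.
Qed.

Lemma inner_rng_interior t : Forall rng t -> interior (inner t).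
Proof.
  induction 1; unfold inner in *; simpl; [constructor|]. unfold innb.
  destruct (Req_dec_T x 0); auto. destruct (Req_dec_T x 1); auto.
  constructor; auto. unfold rng in H. lra.
Qed.

Lemma interior_rng t : interior t -> Forall rng t.
Proof. induction 1; constructor; auto. unfold rng; lra. Qed.

Lemma inner_app l1 l2 : inner (l1 ++ l2) = inner l1 ++ inner l2.
Proof. apply filter_app. Qed.

Definition is01 (r : R) := r = 0 \/ r = 1.

Lemma inner_01 l : Forall is01 l -> inner l = nil.
Proof.
  induction 1; unfold inner in *; simpl; auto. unfold innb.
  destruct H as [e|e]; subst.
  - destruct (Req_dec_T 0 0); [auto|lra].
  - destruct (Req_dec_T 1 0); [lra|]. destruct (Req_dec_T 1 1); [auto|lra].
Qed.

Lemma lowf_01 r : is01 (lowf r).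
Proof. unfold lowf, is01. destruct (Req_dec_T r 1); auto. Qed.

Lemma rng01 r : is01 r -> rng r.
Proof. unfold is01, rng; intros [e|e]; subst; lra. Qed.
Lemma cube_pt_eq {n} (a b : cube_pt n) : cp a = cp b -> a = b.
Proof.
  destruct a as [la pa qa], b as [lb pb qb]; simpl; intro e; subst.
  f_equal; apply proof_irrelevance.
Qed.

Lemma realpt_eq (X : PCSet) (x y : realpt X) :
  (forall q, proj1_sig x q <-> proj1_sig y q) -> x = y.
Proof.
  destruct x as [Px hx], y as [Py hy]; simpl; intro H.
  assert (Px = Py) by (extensionality q; apply propositional_extensionality; auto).
  subst. f_equal; apply proof_irrelevance.
Qed.

Lemma real_of_pequiv (X : PCSet) s1 t1 s2 t2 :
  pequiv (mkpre X s1 t1) (mkpre X s2 t2) -> real X s1 t1 = real X s2 t2.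
Proof.
  intro H. apply realpt_eq. simpl. intro q. split; intro Hq.
  - apply rst_trans with (mkpre X s1 t1); auto. apply rst_sym; auto.
  - apply rst_trans with (mkpre X s2 t2); auto.
Qed.

Lemma pequiv_of_real (X : PCSet) s1 t1 s2 t2 :
  real X s1 t1 = real X s2 t2 -> pequiv (mkpre X s1 t1) (mkpre X s2 t2).
Proof.
  intro H. assert (H2 : proj1_sig (real X s2 t2) (mkpre X s2 t2)) by (simpl; apply rst_refl).
  rewrite <- H in H2. exact H2.
Qed.

Lemma real_ext (X : PCSet) s (t1 t2 : cube_pt (dim s)) : cp t1 = cp t2 -> real X s t1 = real X s t2.
Proof. intro e. rewrite (cube_pt_eq t1 t2 e). reflexivity. Qed.

Definition key {X : PCSet} (p : prept X) : cube X * list R :=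
  (act (mask (pt p)) (pc p), inner (pt p)).

Lemma step_key (X : PCSet) (p q : prept X) : step p q -> key p = key q.
Proof.
  intros [f [Hd [Hc Ht]]]. unfold key. rewrite Ht, Hc.
  assert (Hl : length (pt p) = nones f).
  { rewrite (pdim p), Hc. apply act_dim. auto. }
  rewrite inner_app_f by auto. f_equal.
  rewrite <- comp_mask by auto. symmetry. apply act_comp; auto.
  rewrite mask_length; auto.
Qed.

Lemma pequiv_key (X : PCSet) (p q : prept X) : pequiv p q -> key p = key q.
Proof.
  induction 1; auto using step_key. congruence.
Qed.

Definition faceC {X : PCSet} {s : cube X} (t : cube_pt (dim s)) : cube X := act (mask (cp t)) s.

Lemma face_len {X : PCSet} {s : cube X} (t : cube_pt (dim s)) :
  length (inner (cp t)) = dim (faceC t).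
Proof.
  unfold faceC. rewrite act_dim. apply eq_sym, nones_mask.
  rewrite mask_length. apply eq_sym, cp_len.
Qed.

Definition facept {X : PCSet} {s : cube X} (t : cube_pt (dim s)) : cube_pt (dim (faceC t)) :=
  {| cp := inner (cp t); cp_len := face_len t;
     cp_rng := interior_rng _ (inner_rng_interior _ (cp_rng t)) |}.

Lemma face_eq (X : PCSet) (s : cube X) (t : cube_pt (dim s)) :
  real X (faceC t) (facept t) = real X s t.
Proof.
  apply real_of_pequiv. apply rst_step. exists (mask (cp t)). simpl. split.
  - rewrite mask_length. apply eq_sym, cp_len.
  - split; [reflexivity|]. symmetry. apply app_mask_inner.
Qed.

Lemma supp_unique (X : PCSet) s1 t1 s2 t2 :
  real X s1 t1 = real X s2 t2 -> interior (cp t1) -> interior (cp t2) ->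
  s1 = s2 /\ cp t1 = cp t2.
Proof.
  intros E H1 H2. apply pequiv_of_real, pequiv_key in E. unfold key in E; simpl in E.
  rewrite !mask_interior, !inner_interior in E by auto.
  rewrite !cp_len, !act_id in E. inversion E; auto.
Qed.

Lemma real_surj {X : PCSet} (x : realpt X) : exists s (t : cube_pt (dim s)), real X s t = x.
Proof.
  destruct x as [Px [p Hp]]. exists (pc p).
  exists {| cp := pt p; cp_len := pdim p; cp_rng := prng p |}.
  apply realpt_eq. simpl. intro q. rewrite Hp. destruct p; simpl. tauto.
Qed.

Lemma rep_ex {X : PCSet} (x : realpt X) :
  exists s (t : cube_pt (dim s)), interior (cp t) /\ real X s t = x.
Proof.
  destruct (real_surj x) as [s [t e]]. exists (faceC t), (facept t). split.
  - apply inner_rng_interior, cp_rng.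
  - rewrite face_eq; auto.
Qed.

Definition clampR (r : R) := Rmax 0 (Rmin 1 r).

Lemma clampR_id r : rng r -> clampR r = r.
Proof.
  unfold clampR, rng; intro. rewrite Rmin_right by lra. rewrite Rmax_right; lra.
Qed.

Definition cube_list (n : nat) (l : list R) := map clampR (firstn n l ++ repeat 0 (n - length l)).

Lemma cube_list_len n l : length (cube_list n l) = n.
Proof.
  unfold cube_list. rewrite length_map, length_app, length_firstn, repeat_length. lia.
Qed.

Lemma cube_list_rng n l : Forall (fun r => 0 <= r <= 1) (cube_list n l).
Proof.
  unfold cube_list. apply Forall_forall. intros x Hx. apply in_map_iff in Hx.
  destruct Hx as [y [<- _]]. apply clamp_pf.
Qed.

Definition cube_of (n : nat) (l : list R) : cube_pt n :=
  {| cp := cube_list n l; cp_len := cube_list_len n l; cp_rng := cube_list_rng n l |}.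

Lemma map_clamp l : Forall rng l -> map clampR l = l.
Proof. induction 1; simpl; auto. rewrite clampR_id; auto. f_equal; auto. Qed.

Lemma cp_cube_of n l : length l = n -> Forall rng l -> cp (cube_of n l) = l.
Proof.
  intros Hl Hr. simpl. unfold cube_list. rewrite firstn_all2 by lia.
  replace (n - length l)%nat with 0%nat by lia. rewrite app_nil_r. apply map_clamp; auto.
Qed.

Definition realL (X : PCSet) (s : cube X) (l : list R) := real X s (cube_of (dim s) l).

Lemma realL_real (X : PCSet) s (t : cube_pt (dim s)) : realL X s (cp t) = real X s t.
Proof. apply real_ext. apply cp_cube_of. apply cp_len. apply cp_rng. Qed.

Lemma vertex_face (X : PCSet) (s : cube X) (t : cube_pt (dim s)) :
  vertex (faceC t) = realL X s (map lowf (cp t)).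
Proof.
  unfold vertex, realL. apply real_of_pequiv. apply rst_step.
  exists (mask (cp t)). simpl. split.
  - rewrite mask_length. apply eq_sym, cp_len.
  - split; [reflexivity|].
    rewrite app_mask_zeros. apply cp_cube_of.
    + rewrite length_map. apply cp_len.
    + apply Forall_forall. intros x Hx. apply in_map_iff in Hx. destruct Hx as [y [<- _]].
      apply rng01, lowf_01.
Qed.

Lemma skel_real (X : PCSet) k s (t : cube_pt (dim s)) :
  (length (inner (cp t)) <= k)%nat -> skel k (real X s t).
Proof.
  intro H. exists (faceC t), (facept t). split.
  - rewrite <- face_len. auto.
  - apply face_eq.
Qed.
Definition rep_sig {X : PCSet} (x : realpt X) :=
  constructive_indefinite_description _ (rep_ex x).
Definition supp {X : PCSet} (x : realpt X) : cube X := proj1_sig (rep_sig x).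
Definition rept {X : PCSet} (x : realpt X) :=
  constructive_indefinite_description _ (proj2_sig (rep_sig x)).
Definition sumR (l : list R) := fold_right Rplus 0 l.
Definition low {X : PCSet} (x : realpt X) : realpt X := vertex (supp x).
Definition hgt {X : PCSet} (x : realpt X) : R := sumR (cp (proj1_sig (rept x))).

Lemma supp_isSupp {X : PCSet} (x : realpt X) : IsSupp x (supp x).
Proof.
  unfold IsSupp. destruct (rept x) as [t [Ht Et]]. exists t. split; auto.
Qed.

Lemma supp_spec {X : PCSet} (x : realpt X) s : IsSupp x s -> s = supp x.
Proof.
  intros [t [Ht Et]]. destruct (supp_isSupp x) as [t' [Ht' Et']].
  rewrite <- Et' in Et. apply supp_unique in Et; tauto.
Qed.

Lemma low_real (X : PCSet) s (t : cube_pt (dim s)) :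
  low (real X s t) = realL X s (map lowf (cp t)).
Proof.
  unfold low. rewrite <- (supp_spec _ (faceC t)).
  - apply vertex_face.
  - exists (facept t). split.
    + apply inner_rng_interior, cp_rng.
    + apply face_eq.
Qed.

Lemma hgt_real (X : PCSet) s (t : cube_pt (dim s)) :
  hgt (real X s t) = sumR (inner (cp t)).
Proof.
  unfold hgt. destruct (rept (real X s t)) as [t0 [H0 E0]]. simpl.
  apply pequiv_of_real, pequiv_key in E0. unfold key in E0; simpl in E0.
  inversion E0 as [[E1 E2]]. rewrite (inner_interior (cp t0)) by auto. reflexivity.
Qed.
Lemma I_eq (a b : I) : proj1_sig a = proj1_sig b -> a = b.
Proof. destruct a, b; simpl; intro; subst; f_equal; apply proof_irrelevance. Qed.

Lemma mkI_val r : 0 <= r <= 1 -> proj1_sig (mkI r) = r.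
Proof. intro; simpl. apply clampR_id; auto. Qed.

Lemma mkI_proj (u : I) : mkI (proj1_sig u) = u.
Proof. apply I_eq. apply mkI_val. apply (proj2_sig u). Qed.

Lemma Iv (u : I) : 0 <= proj1_sig u <= 1.
Proof. apply (proj2_sig u). Qed.

Lemma stream_map_comp (A B D : Stream) f g :
  stream_map A B f -> stream_map B D g -> stream_map A D (fun x => g (f x)).
Proof.
  intros [cf hf] [cg hg]. split.
  - intros V HV. apply (cf (fun z => V (g z))). apply cg; auto.
  - intros V HV x y H. apply hg; auto.
Qed.

Lemma stream_map_ext (A B : Stream) f g :
  (forall x, f x = g x) -> stream_map A B f -> stream_map A B g.
Proof.
  intros E H. assert (f = g) by (extensionality x; auto). subst; auto.
Qed.

Lemma stream_map_const (c : I) : stream_map streamI streamI (fun _ => c).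
Proof.
  split.
  - intros W HW x Hx. exists 1. split; [lra|]. auto.
  - intros V HV x y [Hxy H]. simpl in *. split; [lra|].
    intros z Hz. assert (z = c) by (apply I_eq; lra). subst.
    apply (H x). lra.
Qed.

Lemma stream_map_id : stream_map streamI streamI (fun u => u).
Proof. split; [intros V HV; exact HV|]. intros V HV x y H; exact H. Qed.

Lemma I_circ_trans V (a b c : I) : I_circ V a b -> I_circ V b c -> I_circ V a c.
Proof.
  intros [h1 H1] [h2 H2]. split; [lra|]. intros z Hz.
  destruct (Rle_dec (proj1_sig z) (proj1_sig b)); [apply H1|apply H2]; lra.
Qed.

Lemma I_topology : IsTopology I_open.
Proof.
  split; [|split].
  - intros x _. exists 1. split; auto; lra.
  - intros O HO x [V [OV Vx]]. destruct (HO V OV x Vx) as [e [He H]].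
    exists e. split; auto. intros y Hy. exists V. split; auto.
  - intros U V HU HV x [Ux Vx]. destruct (HU x Ux) as [e1 [He1 H1]].
    destruct (HV x Vx) as [e2 [He2 H2]]. exists (Rmin e1 e2). split.
    + apply Rmin_glb_lt; auto.
    + intros y Hy. split; [apply H1|apply H2];
      eapply Rlt_le_trans; eauto; [apply Rmin_l|apply Rmin_r].
Qed.

Lemma I_circ_union (O : (I -> Prop) -> Prop) (HO : forall V, O V -> I_open V) (x y : I) :
  I_circ (union O) x y ->
  clos_trans I (fun a b => exists V, O V /\ I_circ V a b) x y.
Proof.
  intros [Hxy HK].
  set (Rs := fun a b => exists V, O V /\ I_circ V a b).
  set (E := fun r => proj1_sig x <= r <= proj1_sig y /\
                     (r = proj1_sig x \/ clos_trans I Rs x (mkI r))).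
  assert (Hx := Iv x). assert (Hy := Iv y).
  assert (Hb : bound E) by (exists (proj1_sig y); intros r [Hr _]; lra).
  assert (He : exists r, E r) by (exists (proj1_sig x); split; [lra|auto]).
  destruct (completeness E Hb He) as [m [Hub Hlub]].
  assert (Hxm : proj1_sig x <= m) by (apply Hub; split; [lra|auto]).
  assert (Hmy : m <= proj1_sig y) by (apply Hlub; intros r [Hr _]; lra).
  assert (Hm01 : 0 <= m <= 1) by lra.
  destruct (HK (mkI m)) as [V [OV Vm]]. { rewrite mkI_val; auto. }
  destruct (HO V OV _ Vm) as [eps [Heps Heb]]. rewrite mkI_val in Heb by auto.
  assert (Hr : exists r, E r /\ m - eps < r).
  { apply NNPP. intro Hn. assert (m <= m - eps); [|lra].
    apply Hlub. intros r Er. apply Rnot_lt_le. intro Hlt. apply Hn. exists r; auto. }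
  destruct Hr as [r [[Hr1 Hr2] Hrm]].
  assert (Hrm' : r <= m) by (apply Hub; split; auto).
  set (m' := Rmin (proj1_sig y) (m + eps / 2)).
  assert (Hm' : m <= m' <= proj1_sig y).
  { unfold m'. split; [apply Rmin_glb; lra|apply Rmin_l]. }
  assert (Hstep : Rs (mkI r) (mkI m')).
  { exists V. split; auto. unfold I_circ. rewrite !mkI_val by lra. split; [lra|].
    intros z Hz. apply Heb. assert (m' <= m + eps/2) by apply Rmin_r.
    apply Rabs_def1; lra. }
  assert (Em' : E m').
  { split; [lra|]. right. destruct Hr2 as [Hr2|Hr2].
    - replace (mkI r) with x in Hstep. { apply t_step; auto. }
      apply I_eq. rewrite mkI_val by lra. auto.
    - eapply t_trans; eauto. apply t_step; auto. }
  assert (Hm'm : m' <= m) by (apply Hub; auto).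
  assert (Em'y : m' = proj1_sig y).
  { unfold m' in *. destruct (Rle_dec (proj1_sig y) (m + eps/2)).
    - rewrite Rmin_left; auto.
    - rewrite Rmin_right in Hm'm by lra. lra. }
  destruct Em' as [_ [Ex|Ex]].
  - assert (x = y) by (apply I_eq; lra). subst y.
    destruct (HK x) as [W [OW Wx]]. { lra. }
    apply t_step. exists W. split; auto. split; [lra|].
    intros z Hz. replace z with x; auto. apply I_eq; lra.
  - rewrite Em'y, mkI_proj in Ex. auto.
Qed.

Lemma I_stream : IsStream streamI.
Proof.
  split; [apply I_topology|]. split.
  - intros V HV. split; [|split].
    + intros x y [Hxy H]. split; apply H; lra.
    + intros x Vx. split; [lra|]. intros z Hz. replace z with x; auto. apply I_eq; lra.
    + intros x y z. apply I_circ_trans.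
  - intros O HO x y. split.
    + apply I_circ_union; auto.
    + induction 1 as [a b [V [OV [Hab H]]]|a b c _ IH1 _ IH2].
      * split; auto. intros z Hz. exists V. split; auto.
      * eapply I_circ_trans; eauto.
Qed.
Definition contI {X : PCSet} (f : I -> realpt X) :=
  forall U, real_open U -> I_open (fun x => U (f x)).

Definition concat {T : Type} (b1 b2 : I -> T) (u : I) : T :=
  if Rle_dec (proj1_sig u) (1/2) then b1 (mkI (2 * proj1_sig u))
  else b2 (mkI (2 * proj1_sig u - 1)).

Lemma mkI_0 : mkI 0 = I0.
Proof. apply I_eq. rewrite mkI_val; simpl; lra. Qed.
Lemma mkI_1 : mkI 1 = I1.
Proof. apply I_eq. rewrite mkI_val; simpl; lra. Qed.

Lemma concat_left {T} (b1 b2 : I -> T) (u : I) :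
  concat b1 b2 (mkI (proj1_sig u / 2)) = b1 u.
Proof.
  assert (H := Iv u). unfold concat. rewrite mkI_val by lra.
  destruct (Rle_dec (proj1_sig u / 2) (1/2)); [|lra].
  f_equal. replace (2 * (proj1_sig u / 2)) with (proj1_sig u) by field. apply mkI_proj.
Qed.

Lemma concat_right {T} (b1 b2 : I -> T) (x : I) :
  b1 I1 = b2 I0 -> 1/2 <= proj1_sig x -> concat b1 b2 x = b2 (mkI (2 * proj1_sig x - 1)).
Proof.
  intros E H. unfold concat. destruct (Rle_dec (proj1_sig x) (1/2)); auto.
  assert (proj1_sig x = 1/2) by lra. rewrite H0.
  replace (mkI (2 * (1/2))) with I1 by (apply I_eq; rewrite mkI_val; simpl; lra).
  replace (mkI (2 * (1/2) - 1)) with I0 by (apply I_eq; rewrite mkI_val; simpl; lra).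
  auto.
Qed.

Lemma concat_right' {T} (b1 b2 : I -> T) (u : I) :
  b1 I1 = b2 I0 -> concat b1 b2 (mkI ((1 + proj1_sig u) / 2)) = b2 u.
Proof.
  intros E. assert (H := Iv u). rewrite concat_right; auto; rewrite mkI_val by lra; [|lra].
  f_equal. replace (2 * ((1 + proj1_sig u) / 2) - 1) with (proj1_sig u) by field.
  apply mkI_proj.
Qed.

Lemma concat_I0 {T} (b1 b2 : I -> T) : concat b1 b2 I0 = b1 I0.
Proof.
  unfold concat; simpl. destruct (Rle_dec 0 (1/2)); [|lra].
  replace (2 * 0) with 0 by ring. rewrite mkI_0; auto.
Qed.

Lemma concat_I1 {T} (b1 b2 : I -> T) : concat b1 b2 I1 = b2 I1.
Proof.
  unfold concat; simpl. destruct (Rle_dec 1 (1/2)); [lra|].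
  replace (2 * 1 - 1) with 1 by ring. rewrite mkI_1; auto.
Qed.

Lemma concat_cont {X : PCSet} (b1 b2 : I -> realpt X) :
  contI b1 -> contI b2 -> b1 I1 = b2 I0 -> contI (concat b1 b2).
Proof.
  intros c1 c2 E U HU x Hx. assert (Hxv := Iv x).
  destruct (Rlt_le_dec (proj1_sig x) (1/2)) as [Hlt|Hge].
  - unfold concat in Hx. destruct (Rle_dec (proj1_sig x) (1/2)); [|lra].
    destruct (c1 U HU _ Hx) as [e [He H]].
    exists (Rmin (e/2) (1/2 - proj1_sig x)). split.
    { apply Rmin_glb_lt; lra. }
    intros y Hy. assert (Hy1 := Rmin_l (e/2) (1/2 - proj1_sig x)).
    assert (Hy2 := Rmin_r (e/2) (1/2 - proj1_sig x)). assert (Hyv := Iv y).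
    assert (Hy' : Rabs (proj1_sig y - proj1_sig x) < e/2 /\ Rabs (proj1_sig y - proj1_sig x) < 1/2 - proj1_sig x) by lra.
    destruct Hy' as [Hy' Hy'']. apply Rabs_def2 in Hy'. apply Rabs_def2 in Hy''.
    unfold concat. destruct (Rle_dec (proj1_sig y) (1/2)); [|lra].
    apply H. rewrite !mkI_val by lra. apply Rabs_def1; lra.
  - destruct (Rle_lt_dec (proj1_sig x) (1/2)) as [Hle|Hgt].
    + assert (Hh : proj1_sig x = 1/2) by lra.
      unfold concat in Hx. destruct (Rle_dec (proj1_sig x) (1/2)); [|lra].
      rewrite Hh in Hx. replace (2 * (1/2)) with 1 in Hx by field. rewrite mkI_1 in Hx.
      assert (Hx2 : U (b2 (mkI 0))) by (rewrite mkI_0, <- E; auto).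
      destruct (c1 U HU _ Hx) as [e1 [He1 H1]].
      destruct (c2 U HU _ Hx2) as [e2 [He2 H2]].
      exists (Rmin e1 e2 / 2). split.
      { assert (0 < Rmin e1 e2) by (apply Rmin_glb_lt; lra). lra. }
      intros y Hy. assert (Hm1 := Rmin_l e1 e2). assert (Hm2 := Rmin_r e1 e2).
      assert (Hyv := Iv y). apply Rabs_def2 in Hy. rewrite Hh in Hy.
      unfold concat. destruct (Rle_dec (proj1_sig y) (1/2)).
      * apply H1. rewrite mkI_val by lra. simpl. apply Rabs_def1; lra.
      * apply H2. rewrite !mkI_val by lra. apply Rabs_def1; lra.
    + unfold concat in Hx. destruct (Rle_dec (proj1_sig x) (1/2)); [lra|].
      destruct (c2 U HU _ Hx) as [e [He H]].
      exists (Rmin (e/2) (proj1_sig x - 1/2)). split.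
      { apply Rmin_glb_lt; lra. }
      intros y Hy. assert (Hy1 := Rmin_l (e/2) (proj1_sig x - 1/2)).
      assert (Hy2 := Rmin_r (e/2) (proj1_sig x - 1/2)). assert (Hyv := Iv y).
      apply Rabs_def2 in Hy.
      unfold concat. destruct (Rle_dec (proj1_sig y) (1/2)); [lra|].
      apply H. rewrite !mkI_val by lra. apply Rabs_def1; lra.
Qed.

Lemma dipath_cont {X : PCSet} C (b : I -> realpt X) : dipath C b -> contI b.
Proof. intros [c _]. exact c. Qed.

Lemma concat_dipath {X : PCSet} C (HCc : IsCirculation (@real_open X) C) (b1 b2 : I -> realpt X) :
  dipath C b1 -> dipath C b2 -> b1 I1 = b2 I0 -> dipath C (concat b1 b2).
Proof.
  intros d1 d2 E. split.
  { apply concat_cont; auto; eapply dipath_cont; eauto. }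
  destruct d1 as [_ h1]. destruct d2 as [_ h2].
  assert (CL : forall V, real_open V -> forall x y : I, proj1_sig y <= 1/2 ->
            I_circ (fun z => V (concat b1 b2 z)) x y -> C V (concat b1 b2 x) (concat b1 b2 y)).
  { intros V HV x y Hy [Hxy H]. assert (Hxv := Iv x). assert (Hyv := Iv y).
    unfold concat at 1 2. destruct (Rle_dec (proj1_sig x) (1/2)); [|lra].
    destruct (Rle_dec (proj1_sig y) (1/2)); [|lra].
    apply h1; auto. split; [rewrite !mkI_val by lra; lra|].
    intros z Hz. assert (Hzv := Iv z). rewrite !mkI_val in Hz by lra.
    rewrite <- (concat_left b1 b2 z). apply H. rewrite mkI_val by lra. lra. }
  assert (CR : forall V, real_open V -> forall x y : I, 1/2 <= proj1_sig x ->
            I_circ (fun z => V (concat b1 b2 z)) x y -> C V (concat b1 b2 x) (concat b1 b2 y)).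
  { intros V HV x y Hx [Hxy H]. assert (Hxv := Iv x). assert (Hyv := Iv y).
    rewrite !(concat_right b1 b2) by (auto; lra).
    apply h2; auto. split; [rewrite !mkI_val by lra; lra|].
    intros z Hz. assert (Hzv := Iv z). rewrite !mkI_val in Hz by lra.
    rewrite <- (concat_right' b1 b2 z E). apply H. rewrite mkI_val by lra. lra. }
  intros V HV x y Hc. destruct (Rle_dec (proj1_sig y) (1/2)).
  { apply CL; auto. }
  destruct (Rle_dec (1/2) (proj1_sig x)).
  { apply CR; auto. }
  destruct (proj1 HCc V HV) as [_ [_ Htr]].
  set (hf := mkI (1/2)). assert (Hh : proj1_sig hf = 1/2) by (apply mkI_val; lra).
  destruct Hc as [Hxy H].
  apply Htr with (concat b1 b2 hf).
  - apply CL; auto; [lra|]. split; [lra|]. intros z Hz. apply H. lra.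
  - apply CR; auto; [lra|]. split; [lra|]. intros z Hz. apply H. lra.
Qed.

Lemma const_dipath {X : PCSet} C (HCc : IsCirculation (@real_open X) C) (c : realpt X) :
  dipath C (fun _ => c).
Proof.
  split.
  - intros U HU x Hx. exists 1. split; [lra|]. auto.
  - intros V HV x y [Hxy H]. simpl in *. destruct (proj1 HCc V HV) as [_ [Hr _]].
    apply Hr. apply (H x). lra.
Qed.

Lemma concat_cellular {X : PCSet} (b1 b2 : I -> realpt X) :
  cellular b1 -> cellular b2 -> cellular (concat b1 b2).
Proof.
  intros [a1 [a2 a3]] [c1 [c2 c3]]. split; [|split].
  - rewrite concat_I0; auto.
  - rewrite concat_I1; auto.
  - intro u. unfold concat. destruct (Rle_dec (proj1_sig u) (1/2)); auto.
Qed.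

Lemma concat_nonconst {X : PCSet} (b1 b2 : I -> realpt X) :
  b1 I1 = b2 I0 -> nonconst b1 \/ nonconst b2 -> nonconst (concat b1 b2).
Proof.
  intros E [[u [v H]]|[u [v H]]].
  - exists (mkI (proj1_sig u / 2)), (mkI (proj1_sig v / 2)). rewrite !concat_left; auto.
  - exists (mkI ((1 + proj1_sig u) / 2)), (mkI ((1 + proj1_sig v) / 2)).
    rewrite !concat_right'; auto.
Qed.
Definition reach {X : PCSet} C (v w : realpt X) :=
  exists b, dipath C b /\ cellular b /\ b I0 = v /\ b I1 = w.
Definition sreach {X : PCSet} C (v w : realpt X) :=
  exists b, dipath C b /\ cellular b /\ b I0 = v /\ b I1 = w /\ nonconst b.

Lemma reach_trans {X : PCSet} C (HCc : IsCirculation (@real_open X) C) (u v w : realpt X) :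
  reach C u v -> reach C v w -> reach C u w.
Proof.
  intros [b1 [d1 [c1 [e1 f1]]]] [b2 [d2 [c2 [e2 f2]]]].
  exists (concat b1 b2). split; [apply concat_dipath; congruence|].
  split; [apply concat_cellular; auto|]. rewrite concat_I0, concat_I1; auto.
Qed.

Lemma sreach_trans_l {X : PCSet} C (HCc : IsCirculation (@real_open X) C) (u v w : realpt X) :
  sreach C u v -> reach C v w -> sreach C u w.
Proof.
  intros [b1 [d1 [c1 [e1 [f1 n1]]]]] [b2 [d2 [c2 [e2 f2]]]].
  exists (concat b1 b2). split; [apply concat_dipath; congruence|].
  split; [apply concat_cellular; auto|]. rewrite concat_I0, concat_I1.
  split; auto. split; auto. apply concat_nonconst; auto; congruence.
Qed.

Lemma sreach_trans_r {X : PCSet} C (HCc : IsCirculation (@real_open X) C) (u v w : realpt X) :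
  reach C u v -> sreach C v w -> sreach C u w.
Proof.
  intros [b1 [d1 [c1 [e1 f1]]]] [b2 [d2 [c2 [e2 [f2 n2]]]]].
  exists (concat b1 b2). split; [apply concat_dipath; congruence|].
  split; [apply concat_cellular; auto|]. rewrite concat_I0, concat_I1.
  split; auto. split; auto. apply concat_nonconst; auto; congruence.
Qed.

Lemma sreach_reach {X : PCSet} C (u v : realpt X) : sreach C u v -> reach C u v.
Proof. intros [b [d [c [e [f n]]]]]. exists b; auto. Qed.

Lemma skel_mono {X : PCSet} k k' (x : realpt X) : (k <= k')%nat -> skel k x -> skel k' x.
Proof. intros H [s [t [Hs E]]]. exists s, t. split; auto. lia. Qed.

Lemma reach_refl {X : PCSet} C (HCc : IsCirculation (@real_open X) C) (v : realpt X) :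
  skel 0 v -> reach C v v.
Proof.
  intro H. exists (fun _ => v). split; [apply const_dipath; auto|].
  split; auto. split; auto. split; auto. intro; apply (skel_mono 0); auto.
Qed.

Lemma proj_cube_of n l i : length l = n -> Forall rng l ->
  proj i (cube_of n l) = mkI (nth i l 0).
Proof. intros. unfold proj. rewrite cp_cube_of; auto. Qed.

Lemma Forall_app_inv {A} (Pr : A -> Prop) l1 l2 : Forall Pr l1 -> Forall Pr l2 -> Forall Pr (l1 ++ l2).
Proof. intros; apply Forall_app; auto. Qed.

Lemma nth_rng l i : Forall rng l -> rng (nth i l 0).
Proof.
  revert i; induction l as [|a l IH]; intros i H; destruct i; simpl; try (unfold rng; lra).
  - inversion H; auto.
  - inversion H; auto.
Qed.

Lemma edge_map (P : forall n, (cube_pt n -> Prop) -> cube_pt n -> cube_pt n -> Prop)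
  (HP : forall n, IsProductCirc (P n)) n pre a :
  Forall rng pre -> Forall rng a -> (length pre + S (length a))%nat = n ->
  stream_map streamI (cubeS (P n)) (fun u => cube_of n (pre ++ proj1_sig u :: a)).
Proof.
  intros Hp Ha Hn. destruct (HP n) as [_ [_ U]]. apply U; [apply I_stream|].
  intros i Hi.
  assert (Hl : forall u : I, length (pre ++ proj1_sig u :: a) = n)
    by (intro; rewrite length_app; simpl; lia).
  assert (Hr : forall u : I, Forall rng (pre ++ proj1_sig u :: a)).
  { intro u. apply Forall_app; split; auto. constructor; auto. apply Iv. }
  destruct (Nat.lt_trichotomy i (length pre)) as [Hlt|[Heq|Hgt]].
  - apply stream_map_ext with (fun _ => mkI (nth i pre 0)); [|apply stream_map_const].
    intro u. rewrite proj_cube_of; auto. rewrite app_nth1; auto.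
  - apply stream_map_ext with (fun u => u); [|apply stream_map_id].
    intro u. rewrite proj_cube_of; auto. rewrite app_nth2 by lia.
    rewrite Heq, Nat.sub_diag. simpl. symmetry; apply mkI_proj.
  - apply stream_map_ext with (fun _ => mkI (nth (i - length pre - 1) a 0)); [|apply stream_map_const].
    intro u. rewrite proj_cube_of; auto. rewrite app_nth2 by lia.
    destruct (i - length pre)%nat eqn:E; [lia|]. simpl. f_equal. f_equal. lia.
Qed.

Lemma real_map (P : forall n, (cube_pt n -> Prop) -> cube_pt n -> cube_pt n -> Prop)
  {X : PCSet} C (HC : IsRealCirc P C) (s : cube X) :
  stream_map (cubeS (P (dim s))) (realS C) (real X s).
Proof. destruct HC as [_ [H _]]. apply H. Qed.

Lemma Forall01_rng l : Forall is01 l -> Forall rng l.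
Proof. induction 1; constructor; auto. apply rng01; auto. Qed.

Lemma realL_key {X : PCSet} s l : length l = dim s -> Forall rng l ->
  exists t : cube_pt (dim s), cp t = l /\ realL X s l = real X s t.
Proof. intros. exists (cube_of (dim s) l). split; auto. apply cp_cube_of; auto. Qed.

Lemma skel_realL {X : PCSet} k s l : length l = dim s -> Forall rng l ->
  (length (inner l) <= k)%nat -> skel k (realL X s l).
Proof.
  intros H1 H2 H3. destruct (realL_key (X := X) s l H1 H2) as [t [Ht E]]. rewrite E.
  apply skel_real. rewrite Ht; auto.
Qed.

Lemma cube_list_eq n l : length l = n -> Forall rng l -> cube_list n l = l.
Proof. apply cp_cube_of. Qed.

Lemma edge_sreach (P : forall n, (cube_pt n -> Prop) -> cube_pt n -> cube_pt n -> Prop)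
  (HP : forall n, IsProductCirc (P n)) {X : PCSet} C (HC : IsRealCirc P C) (s : cube X) pre a :
  Forall is01 pre -> Forall is01 a -> (length pre + S (length a))%nat = dim s ->
  sreach C (realL X s (pre ++ 0 :: a)) (realL X s (pre ++ 1 :: a)).
Proof.
  intros Hp Ha Hn.
  assert (Hl : forall r, length (pre ++ r :: a) = dim s)
    by (intro; rewrite length_app; simpl; lia).
  assert (Hr : forall r, rng r -> Forall rng (pre ++ r :: a)).
  { intros r Hr. apply Forall_app; split; auto using Forall01_rng. }
  assert (Hin : forall r, inner (pre ++ r :: a) = inner (r :: nil)).
  { intro r. rewrite inner_app, (inner_01 pre) by auto. simpl.
    rewrite (inner_01 a) by auto. destruct (innb r); auto. }
  exists (fun u => realL X s (pre ++ proj1_sig u :: a)). split; [|split; [|split; [|split]]].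
  - unfold dipath. apply (stream_map_comp _ (cubeS (P (dim s)))).
    + apply edge_map; auto using Forall01_rng.
    + apply real_map; auto.
  - split; [|split].
    + apply skel_realL; auto. apply Hr. simpl; unfold rng; lra.
      rewrite Hin. unfold inner; simpl. unfold innb. destruct (Req_dec_T 0 0); [simpl; lia|lra].
    + apply skel_realL; auto. apply Hr. simpl; unfold rng; lra.
      rewrite Hin. unfold inner; simpl. unfold innb.
      destruct (Req_dec_T 1 0); [lra|]. destruct (Req_dec_T 1 1); [simpl; lia|lra].
    + intro u. apply skel_realL; auto. apply Hr, Iv.
      rewrite Hin. unfold inner; simpl. destruct (innb (proj1_sig u)); simpl; lia.
  - reflexivity.
  - reflexivity.
  - exists I0, (mkI (1/2)). intro E. rewrite mkI_val in E by lra.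
    unfold realL in E. apply pequiv_of_real, pequiv_key in E. unfold key in E. simpl in E.
    rewrite !(cube_list_eq (dim s)) in E by (auto; apply Hr; unfold rng; lra).
    rewrite !Hin in E. inversion E as [[E1 E2]]. revert E2. unfold inner; simpl. unfold innb.
    destruct (Req_dec_T 0 0); [|lra]. destruct (Req_dec_T (1/2) 0); [lra|].
    destruct (Req_dec_T (1/2) 1); [lra|]. discriminate.
Qed.
Lemma cube_reach (P : forall n, (cube_pt n -> Prop) -> cube_pt n -> cube_pt n -> Prop)
  (HP : forall n, IsProductCirc (P n)) {X : PCSet} C (HC : IsRealCirc P C) (s : cube X) :
  forall a b, Forall2 Rle a b -> Forall is01 a -> Forall is01 b ->
  forall pre, Forall is01 pre -> (length pre + length a)%nat = dim s ->
  reach C (realL X s (pre ++ a)) (realL X s (pre ++ b)) /\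
  (a <> b -> sreach C (realL X s (pre ++ a)) (realL X s (pre ++ b))).
Proof.
  assert (HCc := proj1 HC).
  induction 1 as [|x y a b Hxy Hab IH]; intros Ha Hb pre Hp Hn.
  - split; [|congruence]. apply reach_refl; auto. apply skel_realL.
    + rewrite app_nil_r; simpl in Hn; lia.
    + rewrite app_nil_r. apply Forall01_rng; auto.
    + rewrite app_nil_r, inner_01; simpl; auto.
  - inversion Ha as [|? ? Hx Ha']; subst. inversion Hb as [|? ? Hy Hb']; subst.
    assert (Hp' : forall z, is01 z -> Forall is01 (pre ++ z :: nil))
      by (intros; apply Forall_app; split; auto).
    assert (Hn' : forall z, (length (pre ++ z :: nil) + length a)%nat = dim s)
      by (intro; rewrite length_app; simpl in *; lia).
    assert (Hr : forall z, pre ++ z :: a = (pre ++ z :: nil) ++ a)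
      by (intro; rewrite <- app_assoc; auto).
    assert (Hr' : forall z, pre ++ z :: b = (pre ++ z :: nil) ++ b)
      by (intro; rewrite <- app_assoc; auto).
    destruct (Req_dec_T x y) as [e|ne].
    + subst y. destruct (IH Ha' Hb' (pre ++ x :: nil) (Hp' x Hx) (Hn' x)) as [R1 R2].
      rewrite Hr, Hr'. split; auto. intro Hne. apply R2. congruence.
    + assert (x = 0 /\ y = 1) as [-> ->].
      { destruct Hx as [->| ->]; destruct Hy as [->| ->]; lra. }
      destruct (IH Ha' Hb' (pre ++ 1 :: nil) (Hp' 1 (or_intror eq_refl)) (Hn' 1)) as [R1 _].
      assert (S1 : sreach C (realL X s (pre ++ 0 :: a)) (realL X s (pre ++ 1 :: b))).
      { apply (sreach_trans_l C HCc _ (realL X s (pre ++ 1 :: a))).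
        - apply (edge_sreach P HP C HC); auto; simpl in Hn; lia.
        - rewrite Hr, Hr'. auto. }
      split; auto. apply sreach_reach; auto.
Qed.
Definition Rrel {X : PCSet} C (x y : realpt X) : Prop :=
  sreach C (low x) (low y) \/ (low x = low y /\ (x = y \/ hgt x < hgt y)).

Lemma Rrel_refl {X : PCSet} C (x : realpt X) : Rrel C x x.
Proof. right. auto. Qed.

Lemma Rrel_trans {X : PCSet} C (HCc : IsCirculation (@real_open X) C) (x y z : realpt X) :
  Rrel C x y -> Rrel C y z -> Rrel C x z.
Proof.
  intros [H1|[E1 H1]] [H2|[E2 H2]].
  - left. eapply sreach_trans_l; eauto. apply sreach_reach; auto.
  - left. rewrite <- E2; auto.
  - left. rewrite E1; auto.
  - right. split; [congruence|]. destruct H1 as [->|H1]; destruct H2 as [->|H2]; auto.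
    right; lra.
Qed.

Lemma low_skel {X : PCSet} (x : realpt X) : skel 0 (low x).
Proof.
  unfold low, vertex. apply skel_real. simpl. rewrite inner_01; simpl; auto.
  clear. induction (dim (supp x)); simpl; constructor; auto. left; auto.
Qed.

Lemma Rrel_reach {X : PCSet} C (HCc : IsCirculation (@real_open X) C) (x y : realpt X) :
  Rrel C x y -> reach C (low x) (low y).
Proof.
  intros [H|[E _]]; [apply sreach_reach; auto|]. rewrite <- E. apply reach_refl; auto.
  apply low_skel.
Qed.

Definition Yopen {X : PCSet} (V : realpt X -> Prop) : Prop :=
  (forall x, V x) \/ (forall x, ~ V x).
Definition Ycirc {X : PCSet} C (V : realpt X -> Prop) (x y : realpt X) : Prop :=
  (forall z, V z) /\ Rrel C x y.
Definition Ystr {X : PCSet} C : Stream :=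
  {| scar := realpt X; sopen := @Yopen X; scirc := Ycirc C |}.

Lemma Y_stream {X : PCSet} C (HCc : IsCirculation (@real_open X) C) : IsStream (Ystr C).
Proof.
  split; [split; [|split]|split].
  - left; auto.
  - intros O HO. destruct (classic (exists V, O V /\ exists x, V x)) as [[V [OV [x Vx]]]|Hn].
    + left. intro y. exists V. split; auto. destruct (HO V OV) as [H|H]; auto.
      exfalso; apply (H x); auto.
    + right. intros x [V [OV Vx]]. apply Hn. eauto.
  - intros U V [HU|HU] [HV|HV].
    + left; auto.
    + right; intros x [_ h]; apply (HV x); auto.
    + right; intros x [h _]; apply (HU x); auto.
    + right; intros x [h _]; apply (HU x); auto.
  - intros V HV. split; [|split].
    + intros x y [H _]. auto.
    + intros x Vx. split; [|apply Rrel_refl]. destruct HV as [H|H]; auto.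
      exfalso; apply (H x); auto.
    + intros x y z [H1 R1] [_ R2]. split; auto. eapply Rrel_trans; eauto.
  - intros O HO x y. split.
    + intros [Hf R]. destruct (Hf x) as [V [OV Vx]]. apply t_step. exists V.
      split; auto. split; auto. destruct (HO V OV) as [H|H]; auto.
      exfalso; apply (H x); auto.
    + induction 1 as [a b [V [OV [Hf R]]]|a b c _ IH1 _ IH2].
      * split; auto. intro z. exists V; auto.
      * destruct IH1 as [Hf R1]. destruct IH2 as [_ R2]. split; auto. eapply Rrel_trans; eauto.
Qed.

Lemma Forall2_nth (l1 l2 : list R) : length l1 = length l2 ->
  (forall i, (i < length l1)%nat -> nth i l1 0 <= nth i l2 0) -> Forall2 Rle l1 l2.
Proof.
  revert l2; induction l1 as [|a l1 IH]; intros [|b l2] Hl H; simpl in *; try discriminate.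
  - constructor.
  - constructor.
    + apply (H 0%nat); lia.
    + apply IH; [lia|]. intros i Hi. apply (H (S i)); lia.
Qed.

Lemma P_full_le (P : forall n, (cube_pt n -> Prop) -> cube_pt n -> cube_pt n -> Prop)
  (HP : forall n, IsProductCirc (P n)) n (t t' : cube_pt n) :
  P n (fun _ => True) t t' -> Forall2 Rle (cp t) (cp t').
Proof.
  intro H. apply Forall2_nth; [rewrite !cp_len; auto|].
  intros i Hi. rewrite cp_len in Hi. destruct (HP n) as [_ [Hpr _]].
  destruct (Hpr i Hi) as [_ Hc].
  assert (Ho : I_open (fun _ : I => True)) by (intros x _; exists 1; split; auto; lra).
  specialize (Hc (fun _ => True) Ho t t' H). destruct Hc as [Hle _].
  unfold proj in Hle. rewrite !mkI_val in Hle; auto; apply nth_rng, cp_rng.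
Qed.

Definition innc (r : R) := if innb r then r else 0.

Lemma sum_inner_cons a t : sumR (inner (a :: t)) = innc a + sumR (inner t).
Proof. unfold inner, innc; simpl. destruct (innb a); simpl; lra. Qed.

Lemma innc_id r : r <> 1 -> innc r = r.
Proof.
  intro H. unfold innc, innb. destruct (Req_dec_T r 0); auto.
  destruct (Req_dec_T r 1); auto. contradiction.
Qed.

Lemma lowlist t t' : Forall2 Rle t t' -> Forall rng t -> Forall rng t' ->
  map lowf t = map lowf t' -> t = t' \/ sumR (inner t) < sumR (inner t').
Proof.
  induction 1 as [|a b t t' Hab Htt IH]; intros Ht Ht' E; auto.
  inversion Ht as [|? ? Ha Ht0]; subst. inversion Ht' as [|? ? Hb Ht0']; subst.
  simpl in E. inversion E as [[Ef Et]].
  rewrite !sum_inner_cons. unfold rng in *.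
  assert (Hc : a = b \/ innc a < innc b).
  { unfold lowf in Ef. destruct (Req_dec_T a 1); destruct (Req_dec_T b 1).
    - left; congruence.
    - lra.
    - lra.
    - rewrite !innc_id by auto. destruct (Req_dec_T a b); auto. right; lra. }
  destruct (IH Ht0 Ht0' Et) as [->|Hlt]; destruct Hc as [->|Hc]; auto.
  - right; lra.
  - right. subst. lra.
  - right; lra.
Qed.

Lemma map_lowf_le t t' : Forall2 Rle t t' -> Forall rng t' -> Forall2 Rle (map lowf t) (map lowf t').
Proof.
  induction 1; intros Hr; simpl; constructor; inversion Hr; subst; auto.
  unfold lowf, rng in *. destruct (Req_dec_T x 1); destruct (Req_dec_T y 1); lra.
Qed.

Lemma map_lowf_01 t : Forall is01 (map lowf t).
Proof. induction t; simpl; constructor; auto. apply lowf_01. Qed.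

Lemma cube_Rrel (P : forall n, (cube_pt n -> Prop) -> cube_pt n -> cube_pt n -> Prop)
  (HP : forall n, IsProductCirc (P n)) {X : PCSet} C (HC : IsRealCirc P C) (s : cube X)
  (t t' : cube_pt (dim s)) :
  Forall2 Rle (cp t) (cp t') -> Rrel C (real X s t) (real X s t').
Proof.
  intro Hle. unfold Rrel. rewrite !low_real.
  assert (Hlen : (length (@nil R) + length (map lowf (cp t)))%nat = dim s)
    by (simpl; rewrite length_map; apply cp_len).
  destruct (cube_reach P HP C HC s (map lowf (cp t)) (map lowf (cp t'))
    (map_lowf_le _ _ Hle (cp_rng t')) (map_lowf_01 _) (map_lowf_01 _) nil (Forall_nil _) Hlen)
    as [R1 R2].
  simpl in R1, R2.
  destruct (list_eq_dec Req_dec_T (map lowf (cp t)) (map lowf (cp t'))) as [E|NE].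
  - right. split; [rewrite E; auto|].
    destruct (lowlist _ _ Hle (cp_rng t) (cp_rng t') E) as [E'|Hlt].
    + left. apply real_ext; auto.
    + right. rewrite !hgt_real. auto.
  - left. auto.
Qed.

Lemma id_Ymap (P : forall n, (cube_pt n -> Prop) -> cube_pt n -> cube_pt n -> Prop)
  (HP : forall n, IsProductCirc (P n)) {X : PCSet} C (HC : IsRealCirc P C) :
  stream_map (realS C) (Ystr C) (fun x : realpt X => x).
Proof.
  destruct HC as [HCc [Hs U]]. apply U; [apply Y_stream; auto|].
  intro s. split.
  - intros V [HV|HV] t Ht; exists 1; split; try lra; intros; [apply HV|exfalso; eapply HV; eauto].
  - intros V HV t t' H. simpl in V, HV |- *. destruct HV as [HV|HV].
    + split; auto.
      assert (E : (fun z : cube_pt (dim s) => V (real X s z)) = (fun _ => True)).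
      { extensionality z. apply propositional_extensionality. split; auto. }
      simpl in H. rewrite E in H. apply (cube_Rrel P HP C (conj HCc (conj Hs U))).
      apply (P_full_le P HP); auto.
    + exfalso. destruct (HP (dim s)) as [[Hc1 _] _].
      assert (Ho : cube_open (fun z : cube_pt (dim s) => V (real X s z))).
      { intros z Hz. exfalso; eapply HV; eauto. }
      destruct (Hc1 _ Ho) as [Hf _]. destruct (Hf t t' H) as [Ht _]. eapply HV; eauto.
Qed.
Definition gam {X : PCSet} {s0 : cube X} (t0 : cube_pt (dim s0)) (u : I) : realpt X :=
  realL X s0 (map (fun r => (1 - proj1_sig u) * r) (cp t0)).

Lemma scale_rng (u : I) l : Forall rng l -> Forall rng (map (fun r => (1 - proj1_sig u) * r) l).
Proof.
  assert (H := Iv u). induction 1; simpl; constructor; auto. unfold rng in *. nra.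
Qed.

Lemma gam_cont {X : PCSet} (s0 : cube X) (t0 : cube_pt (dim s0)) : contI (gam t0).
Proof.
  intros U HU x Hx. unfold gam, realL in Hx.
  destruct (HU s0 _ Hx) as [e [He H]]. exists e. split; auto.
  intros y Hy. apply H. rewrite !cp_cube_of; auto using scale_rng, cp_rng;
    try (rewrite length_map; apply cp_len).
  assert (Hr := cp_rng t0). clear -Hy Hr He. induction Hr; simpl; constructor; auto.
  replace ((1 - proj1_sig y) * x0 - (1 - proj1_sig x) * x0)
    with ((proj1_sig x - proj1_sig y) * x0) by ring.
  rewrite Rabs_mult. unfold rng in H.
  rewrite (Rabs_right x0) by lra. rewrite Rabs_minus_sym in Hy.
  assert (0 <= Rabs (proj1_sig x - proj1_sig y)) by apply Rabs_pos. nra.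
Qed.

Lemma gam_I0 {X : PCSet} (s0 : cube X) (t0 : cube_pt (dim s0)) : gam t0 I0 = real X s0 t0.
Proof.
  unfold gam. simpl. rewrite <- realL_real. f_equal.
  assert (E : forall l : list R, map (fun r => (1 - 0) * r) l = l).
  { induction l; simpl; f_equal; auto; ring. }
  apply E.
Qed.

Lemma gam_I1 {X : PCSet} (s0 : cube X) (t0 : cube_pt (dim s0)) : gam t0 I1 = vertex s0.
Proof.
  unfold gam, vertex, realL. apply real_ext. simpl. rewrite cube_list_eq.
  - simpl. rewrite <- (cp_len t0) at 2. generalize (cp t0). induction l; simpl; f_equal; auto; ring.
  - rewrite length_map; apply cp_len.
  - generalize (cp t0). induction l; simpl; constructor; auto. unfold rng; lra.
Qed.

Definition revp {T : Type} (a : I -> T) (u : I) : T := a (mkI (1 - proj1_sig u)).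

Lemma revp_cont {X : PCSet} (a : I -> realpt X) : contI a -> contI (revp a).
Proof.
  intros c U HU x Hx. unfold revp in *. assert (Hxv := Iv x).
  destruct (c U HU _ Hx) as [e [He H]]. exists e. split; auto.
  intros y Hy. assert (Hyv := Iv y). apply H. rewrite !mkI_val by lra.
  replace (1 - proj1_sig y - (1 - proj1_sig x)) with (- (proj1_sig y - proj1_sig x)) by ring.
  rewrite Rabs_Ropp; auto.
Qed.

Definition psi (a b : R) := (1 - b) * (1 - a) / 4 + b * (1 + a) / 2.

Lemma homotopy_lemma {X : PCSet} (alpha beta : I -> realpt X) (s0 : cube X) (t0 : cube_pt (dim s0)) :
  contI alpha -> contI beta -> alpha I0 = real X s0 t0 -> beta I0 = vertex s0 ->
  homotopic alpha beta.
Proof.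
  intros ca cb E0 E1.
  set (L1 := concat (revp alpha) (gam t0)).
  set (L := concat L1 beta).
  assert (J1 : revp alpha I1 = gam t0 I0).
  { unfold revp. rewrite gam_I0, <- E0. simpl. replace (1 - 1) with 0 by ring.
    rewrite mkI_0; auto. }
  assert (J2 : L1 I1 = beta I0).
  { unfold L1. rewrite concat_I1, gam_I1; auto. }
  assert (cL : contI L).
  { apply concat_cont; auto. apply concat_cont; auto. apply revp_cont; auto. apply gam_cont. }
  exists (fun s t => L (mkI (psi (proj1_sig s) (proj1_sig t)))). split; [|split].
  - intros U HU s t Hst.
    destruct (cL U HU _ Hst) as [e [He H]]. exists (e/2). split; [lra|].
    intros s' t' Hs Ht. apply H.
    assert (Hsv := Iv s). assert (Htv := Iv t). assert (Hsv' := Iv s'). assert (Htv' := Iv t').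
    apply Rabs_def2 in Hs. apply Rabs_def2 in Ht.
    unfold psi. rewrite !mkI_val by (unfold psi; nra).
    apply Rabs_def1; nra.
  - intro s. assert (Hsv := Iv s). unfold psi. simpl.
    replace (mkI ((1 - 0) * (1 - proj1_sig s) / 4 + 0 * (1 + proj1_sig s) / 2))
      with (mkI (proj1_sig (mkI ((1 - proj1_sig s) / 2)) / 2)).
    2:{ rewrite mkI_val by lra. f_equal. field. }
    unfold L. rewrite concat_left. unfold L1.
    replace (mkI ((1 - proj1_sig s) / 2)) with (mkI (proj1_sig (mkI (1 - proj1_sig s)) / 2)).
    2:{ rewrite mkI_val by lra. auto. }
    rewrite concat_left. unfold revp. rewrite mkI_val by lra.
    replace (1 - (1 - proj1_sig s)) with (proj1_sig s) by ring. rewrite mkI_proj; auto.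
  - intro s. assert (Hsv := Iv s). unfold psi. simpl.
    replace ((1 - 1) * (1 - proj1_sig s) / 4 + 1 * (1 + proj1_sig s) / 2)
      with ((1 + proj1_sig s) / 2) by field.
    unfold L. apply concat_right'; auto.
Qed.
Theorem mainTheorem6 (X : PCSet)
  (P : forall n, (cube_pt n -> Prop) -> cube_pt n -> cube_pt n -> Prop)
  (HP : forall n, IsProductCirc (P n))
  (C : (realpt X -> Prop) -> realpt X -> realpt X -> Prop)
  (HC : IsRealCirc P C)
  (alpha : I -> realpt X) (Halpha : dipath C alpha) :
  exists beta : I -> realpt X,
    dipath C beta /\
    (forall s s' : cube X, IsSupp (alpha I0) s -> IsSupp (alpha I1) s' ->
       beta I0 = vertex s /\ beta I1 = vertex s') /\
    cellular beta /\
    homotopic alpha beta /\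
    (nonconst alpha -> alpha I0 = alpha I1 -> nonconst beta).
Proof.
  assert (HCc := proj1 HC).
  assert (Hrel : forall u v : I, proj1_sig u <= proj1_sig v -> Rrel C (alpha u) (alpha v)).
  { intros u v Huv. destruct (id_Ymap P HP C HC) as [_ Hy].
    assert (Hfull : real_open (fun _ : realpt X => True)).
    { intros s t _. exists 1. split; auto; lra. }
    destruct Halpha as [_ Ha].
    assert (Hc : C (fun _ => True) (alpha u) (alpha v)).
    { apply (Ha (fun _ => True) Hfull). split; auto. }
    destruct (Hy (fun _ => True) (or_introl (fun _ => Logic.I)) _ _ Hc) as [_ R]. exact R. }
  assert (R01 := Hrel I0 I1 ltac:(simpl; lra)).
  destruct (rept (alpha I0)) as [t0 [Ht0 Et0]].
  assert (Hend : forall beta : I -> realpt X, beta I0 = low (alpha I0) -> beta I1 = low (alpha I1) ->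
    forall s s' : cube X, IsSupp (alpha I0) s -> IsSupp (alpha I1) s' ->
       beta I0 = vertex s /\ beta I1 = vertex s').
  { intros beta B0 B1 s s' H0 H1. rewrite (supp_spec _ _ H0), (supp_spec _ _ H1). split; auto. }
  destruct (classic (nonconst alpha /\ alpha I0 = alpha I1)) as [[Hnc Hlp]|Hno].
  - assert (Hs : sreach C (low (alpha I0)) (low (alpha I1))).
    { assert (Hw : exists w, alpha w <> alpha I0).
      { destruct Hnc as [u [v Huv]]. destruct (classic (alpha u = alpha I0)) as [E|E].
        - exists v. congruence.
        - exists u; auto. }
      destruct Hw as [w Hw].
      assert (Hw0 := Iv w).
      assert (R1 := Hrel I0 w ltac:(simpl; lra)). assert (R2 := Hrel w I1 ltac:(simpl; lra)).
      destruct R1 as [S1|[E1 H1]].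
      - eapply sreach_trans_l; eauto. apply Rrel_reach; auto.
      - destruct R2 as [S2|[E2 H2]].
        + rewrite E1; auto.
        + exfalso. rewrite <- Hlp in H2. destruct H1 as [H1|H1]; [congruence|].
          destruct H2 as [H2|H2]; [congruence|]. lra. }
    destruct Hs as [beta [d [c [b0 [b1 n]]]]].
    exists beta. split; auto. split; [apply Hend; auto|]. split; auto. split; auto.
    apply (homotopy_lemma alpha beta (supp (alpha I0)) t0); auto.
    + eapply dipath_cont; eauto.
    + eapply dipath_cont; eauto.
  - destruct (Rrel_reach C HCc _ _ R01) as [beta [d [c [b0 b1]]]].
    exists beta. split; auto. split; [apply Hend; auto|]. split; auto. split.
    + apply (homotopy_lemma alpha beta (supp (alpha I0)) t0); auto.
      * eapply dipath_cont; eauto.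
      * eapply dipath_cont; eauto.
    + intros H1 H2. exfalso. apply Hno; auto.
Qed.
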